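(* Let $\Delta' \preceq \Delta$. If $\Delta' \rightsquigarrow_\pi \Theta'$ then $\Delta \rightsquigarrow_\pi \Theta$ for some $\Theta$ such that $\Theta' \preceq \Theta$.
   Context: lqCCS is a quantum process calculus with sum $P+Q$ and if-then-else $\mathrm{if}\ e\ \mathrm{then}\ P\ \mathrm{else}\ Q$. The refinement relation $P' \preceq P$ is the smallest reflexive relation that is preserved by all process constructors (parallel, sum, prefixes, restriction, if-then-else) and satisfies: $P' \preceq P + Q$ whenever $P' \preceq P$; $Q' \preceq P + Q$ whenever $Q' \preceq Q$; and $\mathrm{if}\ e\ \mathrm{then}\ P'\ \mathrm{else}\ Q' \preceq P + Q$ for any boolean expression $e$ whenever $P' \preceq P$ and $Q' \preceq Q$ (i.e. $P'$ is obtained from $P$ by replacing some sums $Q+Q'$ by $Q$, $Q'$ or a boolean conditional between them). Extended configurations $\langle\!\langle \rho, P, R \rangle\!\rangle$ (density operator, process, observer) are refined by refining the process and keeping $\rho$ and $R$; the deadlock configuration $\bot$ refines every configuration; refinement of distributions is defined by linearity. $\rightsquigarrow_\pi$ is the enhanced semantics: transitions indexed by $\pi = \diamond$ when only the process moves (standard probabilistic reduction) or $\pi \in \{\ell,r\}^*$ naming the parallel component of the observer that acts (observer applies a superoperator/measurement, receives a value output by the process, or sends a value to it), lifted to distributions so that all configurations in the support move with the same index, configurations with no $\pi$-move going to $\overline{\bot}$. *)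

(* Defs.v *)
From mathcomp Require Import all_boot all_algebra.
From mathcomp Require Import boolp.
From Stdlib Require List.
Set Implicit Arguments. Unset Strict Implicit. Unset Printing Implicit Defensive.
Import GRing.Theory Num.Theory.
Local Open Scope ring_scope.

(* A model of lqCCS.  Scalars: an algebraically closed numeric field C       *)
(* (e.g. the complex numbers).  The global quantum system has Hilbert space  *)
(* C^d; a quantum state is a d x d matrix (density operator).                *)
(* Channels and values are natural numbers.  Binders (input, measurement     *)
(* outcome) are represented by Rocq functions (HOAS): the continuation of an *)
(* input c?x.P is the map v |-> P[v/x]; boolean expressions of a closed     *)
(* conditional are thus booleans.                                            *)

Inductive side := SL | SR.

Inductive idx := Diamond | Obs of seq side.

Section LqCCS.
Variable C : numClosedFieldType.
Variable d : nat.

Definition mxadj (A : 'M[C]_d) : 'M[C]_d := (map_mx Num.conj A)^T.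

(* superoperators (Kraus families) and measurements, on the global space *)
Definition kraus := seq 'M[C]_d.

Inductive proc : Type :=
| Nil
| Tau of proc
| Out of nat & nat & proc
| In of nat & (nat -> proc)
| Sop of kraus & proc
| Meas of kraus & (nat -> proc)
| Par of proc & proc
| Sum of proc & proc
| Res of proc & nat
| Ite of bool & proc & proc.

Inductive pref : proc -> proc -> Prop :=
| pref_refl P : pref P P
| pref_tau P' P : pref P' P -> pref (Tau P') (Tau P)
| pref_out c v P' P : pref P' P -> pref (Out c v P') (Out c v P)
| pref_in c f' f : (forall v, pref (f' v) (f v)) -> pref (In c f') (In c f)
| pref_sop K P' P : pref P' P -> pref (Sop K P') (Sop K P)
| pref_meas M f' f : (forall i, pref (f' i) (f i)) -> pref (Meas M f') (Meas M f)
| pref_par P' P Q' Q : pref P' P -> pref Q' Q -> pref (Par P' Q') (Par P Q)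
| pref_sum P' P Q' Q : pref P' P -> pref Q' Q -> pref (Sum P' Q') (Sum P Q)
| pref_res c P' P : pref P' P -> pref (Res P' c) (Res P c)
| pref_ite e P' P Q' Q : pref P' P -> pref Q' Q -> pref (Ite e P' Q') (Ite e P Q)
| pref_suml P' P Q : pref P' P -> pref P' (Sum P Q)
| pref_sumr Q' P Q : pref Q' Q -> pref Q' (Sum P Q)
| pref_ite_sum e P' P Q' Q : pref P' P -> pref Q' Q -> pref (Ite e P' Q') (Sum P Q).

Inductive qop := QId | QSop of kraus | QMeas of kraus.

Inductive lbl := LInt of qop | LOut of nat & nat | LIn of nat & nat.

Definition lbl_chan (a : lbl) : option nat :=
  match a with LInt _ => None | LOut c _ => Some c | LIn c _ => Some c end.

(* Labelled transitions of processes; the continuation is indexed by the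
   measurement outcome (ignored for non-measuring moves). *)
Inductive ptrans : proc -> lbl -> (nat -> proc) -> Prop :=
| pt_tau P : ptrans (Tau P) (LInt QId) (fun _ => P)
| pt_sop K P : ptrans (Sop K P) (LInt (QSop K)) (fun _ => P)
| pt_meas M f : ptrans (Meas M f) (LInt (QMeas M)) f
| pt_out c v P : ptrans (Out c v P) (LOut c v) (fun _ => P)
| pt_in c f v : ptrans (In c f) (LIn c v) (fun _ => f v)
| pt_suml P Q a k : ptrans P a k -> ptrans (Sum P Q) a k
| pt_sumr P Q a k : ptrans Q a k -> ptrans (Sum P Q) a k
| pt_ite e P Q a k : ptrans (if e then P else Q) a k -> ptrans (Ite e P Q) a k
| pt_parl P Q a k : ptrans P a k -> ptrans (Par P Q) a (fun i => Par (k i) Q)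
| pt_parr P Q a k : ptrans Q a k -> ptrans (Par P Q) a (fun i => Par P (k i))
| pt_coml P Q c v kP kQ : ptrans P (LOut c v) kP -> ptrans Q (LIn c v) kQ ->
    ptrans (Par P Q) (LInt QId) (fun i => Par (kP i) (kQ i))
| pt_comr P Q c v kP kQ : ptrans P (LIn c v) kP -> ptrans Q (LOut c v) kQ ->
    ptrans (Par P Q) (LInt QId) (fun i => Par (kP i) (kQ i))
| pt_res P c a k : ptrans P a k -> lbl_chan a <> Some c ->
    ptrans (Res P c) a (fun i => Res (k i) c).

(* Moves of the observer component at position pi of the parallel tree. *)
Inductive otrans : proc -> seq side -> lbl -> (nat -> proc) -> Prop :=
| ot_leaf R a k : ptrans R a k -> (forall R1 R2, R <> Par R1 R2) ->
    otrans R [::] a k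
| ot_l R1 R2 pi a k : otrans R1 pi a k ->
    otrans (Par R1 R2) (SL :: pi) a (fun i => Par (k i) R2)
| ot_r R1 R2 pi a k : otrans R2 pi a k ->
    otrans (Par R1 R2) (SR :: pi) a (fun i => Par R1 (k i)).

Definition is_density (rho : 'M[C]_d) : Prop :=
  (exists A : 'M[C]_d, rho = A *m mxadj A) /\ \tr rho = 1.

Definition complete (K : kraus) : Prop :=
  \sum_(k <- K) mxadj k *m k = 1%:M.

Definition qvalid (q : qop) (rho : 'M[C]_d) : Prop :=
  match q with
  | QId => True
  | QSop K => complete K
  | QMeas M => complete M /\ is_density rho
  end.

Definition apply_kraus (K : kraus) (rho : 'M[C]_d) : 'M[C]_d :=
  \sum_(k <- K) k *m rho *m mxadj k.

Definition meas_prob (M : kraus) (rho : 'M[C]_d) (i : nat) : C :=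
  \tr (nth 0 M i *m rho *m mxadj (nth 0 M i)).

Definition meas_post (M : kraus) (rho : 'M[C]_d) (i : nat) : 'M[C]_d :=
  (meas_prob M rho i)^-1 *: (nth 0 M i *m rho *m mxadj (nth 0 M i)).

Definition qeff (q : qop) (rho : 'M[C]_d) : seq (C * 'M[C]_d * nat) :=
  match q with
  | QId => [:: (1, rho, 0%N)]
  | QSop K => [:: (1, apply_kraus K rho, 0%N)]
  | QMeas M => [seq (meas_prob M rho i, meas_post M rho i, i)
               | i <- iota 0 (size M) & meas_prob M rho i != 0]
  end.

(* Extended configurations << rho, P, R >> and the deadlock configuration. *)
Inductive xconf := Bot | XC of 'M[C]_d & proc & proc.

Definition cref (c' c : xconf) : Prop :=
  match c', c with
  | Bot, _ => True
  | XC rho' P' R', XC rho P R => rho' = rho /\ pref P' P /\ R' = R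
  | XC _ _ _, Bot => False
  end.

(* (finitely supported) distributions over extended configurations *)
Definition dist := xconf -> C.

Definition dist_of (L : seq (C * xconf)) : dist :=
  fun c => \sum_(x <- L) (if `[< x.2 = c >] then x.1 else 0).

Definition dirac (c : xconf) : dist := dist_of [:: (1, c)].

Definition qdist (q : qop) (rho : 'M[C]_d) (F : 'M[C]_d -> nat -> xconf) : dist :=
  dist_of [seq (x.1.1, F x.1.2 x.2) | x <- qeff q rho].

Inductive xstep : xconf -> idx -> dist -> Prop :=
| xs_proc rho P R q k : ptrans P (LInt q) k -> qvalid q rho ->
    xstep (XC rho P R) Diamond (qdist q rho (fun rho' i => XC rho' (k i) R))
| xs_obs_op rho P R pi q k : otrans R pi (LInt q) k -> qvalid q rho ->
    xstep (XC rho P R) (Obs pi) (qdist q rho (fun rho' i => XC rho' P (k i)))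
| xs_obs_recv rho P R pi c v kR kP :
    otrans R pi (LIn c v) kR -> ptrans P (LOut c v) kP ->
    xstep (XC rho P R) (Obs pi) (dirac (XC rho (kP 0%N) (kR 0%N)))
| xs_obs_send rho P R pi c v kR kP :
    otrans R pi (LOut c v) kR -> ptrans P (LIn c v) kP ->
    xstep (XC rho P R) (Obs pi) (dirac (XC rho (kP 0%N) (kR 0%N))).

Definition dstep (Delta : dist) (pi : idx) (Theta : dist) : Prop :=
  exists L : seq (C * xconf * dist),
    List.Forall (fun x => 0 < x.1.1 /\
       (xstep x.1.2 pi x.2 \/
        ((forall T, ~ xstep x.1.2 pi T) /\ x.2 = dirac Bot))) L /\
    Delta = dist_of [seq x.1 | x <- L] /\
    Theta = (fun c => \sum_(x <- L) x.1.1 * x.2 c).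

Definition dref (Delta' Delta : dist) : Prop :=
  exists L : seq (C * xconf * xconf),
    List.Forall (fun x => 0 < x.1.1 /\ cref x.1.2 x.2) L /\
    Delta' = dist_of [seq (x.1.1, x.1.2) | x <- L] /\
    Delta = dist_of [seq (x.1.1, x.2) | x <- L].

End LqCCS.

(* Main.v *)
Require Import Defs.
From mathcomp Require Import all_boot all_order all_algebra boolp.
Set Implicit Arguments. Unset Strict Implicit. Unset Printing Implicit Defensive.
Import GRing.Theory Num.Theory.
Import Order.Theory.
Local Open Scope ring_scope.

Section Proof.
Variable C : numClosedFieldType.
Variable d : nat.

Lemma mxadjM (X Y : 'M[C]_d) : mxadj (X *m Y) = mxadj Y *m mxadj X.
Proof. by rewrite /mxadj map_mxM trmx_mul. Qed.

Lemma tr_adj_ge0 (B : 'M[C]_d) : 0 <= \tr (B *m mxadj B).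
Proof.
rewrite /mxtrace; apply: sumr_ge0 => i _; rewrite mxE; apply: sumr_ge0 => j _.
by rewrite /mxadj !mxE mul_conjC_ge0.
Qed.

Lemma meas_prob_ge0 (M : kraus C d) rho i : is_density rho -> 0 <= meas_prob M rho i.
Proof.
case=> [[A ->] _]; rewrite /meas_prob.
have -> : nth 0 M i *m (A *m mxadj A) *m mxadj (nth 0 M i) =
   (nth 0 M i *m A) *m mxadj (nth 0 M i *m A) by rewrite mxadjM !mulmxA.
exact: tr_adj_ge0.
Qed.

Lemma qeff_pos (q : qop C d) rho (x : C * 'M[C]_d * nat) : qvalid q rho -> x \in qeff q rho -> 0 < x.1.1.
Proof.
case: q => [|K|M] /= Hv.
- by rewrite inE => /eqP -> /=.
- by rewrite inE => /eqP -> /=.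
- case/mapP=> i; rewrite mem_filter => /andP[Hi _] -> /=.
  by rewrite lt0r Hi meas_prob_ge0 //; case: Hv.
Qed.

Lemma qeff_sum (q : qop C d) rho : qvalid q rho -> \sum_(x <- qeff q rho) x.1.1 = 1.
Proof.
case: q => [|K|M] /= Hv; try by rewrite big_seq1.
case: Hv => HM [_ Htr].
rewrite big_map big_filter /=.
rewrite (eq_bigr (fun i => meas_prob M rho i)); last by [].
rewrite big_mkcond /=.
rewrite (eq_bigr (fun i => meas_prob M rho i)); last first.
  by move=> i _; case: (meas_prob M rho i =P 0) => [->|].
have -> : iota 0 (size M) = index_iota 0 (size M) by rewrite /index_iota subn0.
rewrite /meas_prob -(big_nth 0 predT (fun k => \tr (k *m rho *m mxadj k))) /=.
rewrite (eq_bigr (fun k => \tr (rho *m (mxadj k *m k)))); last first.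
  by move=> k _; rewrite -mulmxA mxtrace_mulC mulmxA.
rewrite -linear_sum /= -mulmx_sumr.
by rewrite HM mulmx1.
Qed.
Notation proc := (proc C d).

Lemma ptrans_sim (P' P : proc) : pref P' P ->
  forall a k', ptrans P' a k' -> exists k, ptrans P a k /\ forall i, pref (k' i) (k i).
Proof.
elim=> {P' P}.
- move=> P a k' H; exists k'; split=> // i; exact: pref_refl.
- move=> P' P HP IH a k' H; inversion H; subst.
  eexists; split; [exact: pt_tau|] => i /=; exact: HP.
- move=> c v P' P HP IH a k' H; inversion H; subst.
  eexists; split; [exact: pt_out|] => i /=; exact: HP.
- move=> c f' f HP IH a k' H; inversion H; subst.
  eexists; split; [exact: pt_in|] => i /=; exact: HP.
- move=> K P' P HP IH a k' H; inversion H; subst.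
  eexists; split; [exact: pt_sop|] => i /=; exact: HP.
- move=> M f' f HP IH a k' H; inversion H; subst.
  eexists; split; [exact: pt_meas|] => i /=; exact: HP.
- move=> P' P Q' Q HP IHP HQ IHQ a k' H; inversion H; subst.
  + have [kk [Hk Hki]] := IHP _ _ H4.
    eexists; split; [exact: pt_parl Hk|] => i /=; exact: pref_par.
  + have [kk [Hk Hki]] := IHQ _ _ H4.
    eexists; split; [exact: pt_parr Hk|] => i /=; exact: pref_par.
  + have [k1 [Hk1 Hk1i]] := IHP _ _ H2.
    have [k2 [Hk2 Hk2i]] := IHQ _ _ H5.
    eexists; split; [exact: pt_coml Hk1 Hk2|] => i /=; exact: pref_par.
  + have [k1 [Hk1 Hk1i]] := IHP _ _ H2.
    have [k2 [Hk2 Hk2i]] := IHQ _ _ H5.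
    eexists; split; [exact: pt_comr Hk1 Hk2|] => i /=; exact: pref_par.
- move=> P' P Q' Q HP IHP HQ IHQ a k' H; inversion H; subst.
  + have [kk [Hk Hki]] := IHP _ _ H4.
    eexists; split; [exact: pt_suml Hk|] => //.
  + have [kk [Hk Hki]] := IHQ _ _ H4.
    eexists; split; [exact: pt_sumr Hk|] => //.
- move=> c P' P HP IH a k' H; inversion H; subst.
  have [kk [Hk Hki]] := IH _ _ ltac:(eassumption).
  eexists; split; [apply: pt_res; [exact: Hk|assumption]|] => i /=; exact: pref_res.
- move=> e P' P Q' Q HP IHP HQ IHQ a k' H; inversion H; subst.
  case: e H5 H => /= H5 H.
  + have [kk [Hk Hki]] := IHP _ _ H5.
    by eexists; split; [apply: pt_ite; exact: Hk|].
  + have [kk [Hk Hki]] := IHQ _ _ H5.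
    by eexists; split; [apply: pt_ite; exact: Hk|].
- move=> P' P Q HP IH a k' H.
  have [kk [Hk Hki]] := IH _ _ H.
  by eexists; split; [exact: pt_suml Hk|].
- move=> Q' P Q HP IH a k' H.
  have [kk [Hk Hki]] := IH _ _ H.
  by eexists; split; [exact: pt_sumr Hk|].
- move=> e P' P Q' Q HP IHP HQ IHQ a k' H; inversion H; subst.
  case: e H5 H => /= H5 H.
  + have [kk [Hk Hki]] := IHP _ _ H5.
    by eexists; split; [apply: pt_suml; exact: Hk|].
  + have [kk [Hk Hki]] := IHQ _ _ H5.
    by eexists; split; [apply: pt_sumr; exact: Hk|].
Qed.

Lemma Forall_map_in (T : eqType) U (P : U -> Prop) (f : T -> U) (Q : seq T) :
  (forall x, x \in Q -> P (f x)) -> List.Forall P (map f Q).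
Proof.
elim: Q => [|x Q IH] H /=; constructor.
- by apply: H; rewrite mem_head.
- by apply: IH => y Hy; apply: H; rewrite in_cons Hy orbT.
Qed.

Notation xconf := (xconf C d).
Notation dist := (dist C d).
Notation bot := (@Bot C d).

Lemma dref_map (T : eqType) (Q : seq T) (w : T -> C) (F' F : T -> xconf) :
  (forall x, x \in Q -> 0 < w x) -> (forall x, x \in Q -> cref (F' x) (F x)) ->
  dref (dist_of [seq (w x, F' x) | x <- Q]) (dist_of [seq (w x, F x) | x <- Q]).
Proof.
move=> Hp Hc; exists [seq (w x, F' x, F x) | x <- Q]; split; last by rewrite -!map_comp.
by apply: Forall_map_in => x Hx /=; split; [exact: Hp|exact: Hc].
Qed.

Lemma dref_bot (T : eqType) (Q : seq T) (w : T -> C) (F : T -> xconf) :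
  (forall x, x \in Q -> 0 < w x) -> \sum_(x <- Q) w x = 1 ->
  dref (dirac bot) (dist_of [seq (w x, F x) | x <- Q]).
Proof.
move=> Hp Hs; exists [seq (w x, bot, F x) | x <- Q]; split; last split; last by rewrite -!map_comp.
- by apply: Forall_map_in => x Hx /=; split; [exact: Hp|].
- apply: funext => c; rewrite /dirac /dist_of big_seq1 big_map /=.
  rewrite big_map /=; case: (asboolP (bot = c)) => _; [by rewrite Hs|by rewrite big1].
Qed.

Lemma dirac_map (c : xconf) : dirac c = dist_of [seq ((fun _ => 1) x, (fun _ => c) x) | x <- [:: tt]].
Proof. by []. Qed.

Lemma qdist_map (q : qop C d) rho (G : 'M[C]_d -> nat -> xconf) :
  qdist q rho G = dist_of [seq ((fun x => x.1.1) x, (fun x => G x.1.2 x.2) x) | x <- qeff q rho].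
Proof. by []. Qed.

Lemma xstep_bot (c : xconf) pi T : xstep c pi T -> dref (dirac bot) T.
Proof.
case=> {c pi T}.
- move=> rho P R q k _ Hv; rewrite qdist_map; apply: dref_bot.
    by move=> x Hx; apply: qeff_pos Hx.
  exact: qeff_sum.
- move=> rho P R pi q k _ Hv; rewrite qdist_map; apply: dref_bot.
    by move=> x Hx; apply: qeff_pos Hx.
  exact: qeff_sum.
- move=> *; rewrite [X in dref _ X]dirac_map; apply: dref_bot => //; by [move=> x; rewrite inE => /eqP -> | rewrite big_seq1].
- move=> *; rewrite [X in dref _ X]dirac_map; apply: dref_bot => //; by [move=> x; rewrite inE => /eqP -> | rewrite big_seq1].
Qed.

Lemma xstep_sim (c' c : xconf) pi T' : cref c' c -> xstep c' pi T' ->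
  exists T, xstep c pi T /\ dref T' T.
Proof.
move=> Hc H; case: H Hc => {c' pi T'}.
- move=> rho P' R q k' Hk' Hv; case: c => // rho0 P R0 [<- [HP <-]].
  have [k [Hk Hki]] := ptrans_sim HP Hk'.
  exists (qdist q rho (fun rho' i => XC rho' (k i) R)); split; first exact: xs_proc.
  rewrite !qdist_map; apply: dref_map; first by move=> x Hx; apply: qeff_pos Hx.
  by move=> x _ /=.
- move=> rho P' R pi q k Hk Hv; case: c => // rho0 P R0 [<- [HP <-]].
  exists (qdist q rho (fun rho' i => XC rho' P (k i))); split; first exact: xs_obs_op.
  rewrite !qdist_map; apply: dref_map; first by move=> x Hx; apply: qeff_pos Hx.
  by move=> x _ /=.
- move=> rho P' R pi ch v kR kP' HR HP'; case: c => // rho0 P R0 [<- [HP <-]].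
  have [kP [HkP Hki]] := ptrans_sim HP HP'.
  exists (dirac (XC rho (kP 0%N) (kR 0%N))); split; first exact: xs_obs_recv HR HkP.
  rewrite !dirac_map; apply: dref_map => //; by move=> x _ /=.
- move=> rho P' R pi ch v kR kP' HR HP'; case: c => // rho0 P R0 [<- [HP <-]].
  have [kP [HkP Hki]] := ptrans_sim HP HP'.
  exists (dirac (XC rho (kP 0%N) (kR 0%N))); split; first exact: xs_obs_send HR HkP.
  rewrite !dirac_map; apply: dref_map => //; by move=> x _ /=.
Qed.

Definition okstep (c : xconf) pi (T : dist) :=
  xstep c pi T \/ ((forall T0, ~ xstep c pi T0) /\ T = dirac bot).

Lemma okstep_sim (c' c : xconf) pi T' : cref c' c -> okstep c' pi T' ->
  exists T, okstep c pi T /\ dref T' T.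
Proof.
move=> Hc [H|[Hn ->]].
  by have [T [HT HTT]] := xstep_sim Hc H; exists T; split; [left|].
have [[T HT]|Hn'] := pselect (exists T, xstep c pi T).
  by exists T; split; [left|exact: xstep_bot HT].
exists (dirac bot); split; first by right; split=> // T HT; apply: Hn'; exists T.
exists [:: (1, bot, bot)]; split=> //; by constructor.
Qed.

Lemma Forall_mapT A B (P : B -> Prop) (f : A -> B) (L : seq A) :
  (forall x, List.In x L -> P (f x)) -> List.Forall P (map f L).
Proof.
elim: L => [|x L IH] H /=; constructor; first by apply: H; left.
by apply: IH => y Hy; apply: H; right.
Qed.

Lemma Forall_flat A B (P : B -> Prop) (g : A -> seq B) (L : seq A) :
  (forall x, List.In x L -> List.Forall P (g x)) -> List.Forall P (flatten (map g L)).
Proof.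
elim: L => [|x L IH] H /=; first by constructor.
apply/List.Forall_app; split; first by apply: H; left.
by apply: IH => y Hy; apply: H; right.
Qed.

Lemma In_filter A (p : pred A) (L : seq A) x :
  List.In x (filter p L) -> List.In x L /\ p x.
Proof.
elim: L => [|y L IH] //=; case: ifP => Hp /=.
- by case=> [<-|/IH [? ?]]; split=> //; [left|right].
- by move/IH=> [? ?]; split=> //; right.
Qed.

Lemma eq_big_In A (L : seq A) (F G : A -> C) :
  (forall x, List.In x L -> F x = G x) -> \sum_(x <- L) F x = \sum_(x <- L) G x.
Proof.
elim: L => [|x L IH] H; first by rewrite !big_nil.
rewrite !big_cons H; last by left.
by rewrite IH // => y Hy; apply: H; right.
Qed.

Lemma dist_of_ge0 (L : seq (C * xconf)) c :
  (forall x, List.In x L -> 0 < x.1) -> 0 <= dist_of L c.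
Proof.
move=> H; rewrite /dist_of; elim: L H => [|x L IH] H; first by rewrite big_nil.
rewrite big_cons addr_ge0 //; last by apply: IH => y Hy; apply: H; right.
by case: ifP => _ //; apply: ltW; apply: H; left.
Qed.

Lemma dist_of_gt0 (L : seq (C * xconf)) x :
  (forall x, List.In x L -> 0 < x.1) -> List.In x L -> 0 < dist_of L x.2.
Proof.
move=> H; rewrite /dist_of; elim: L H => [|y L IH] H //= [Hyx|Hx].
- subst y; rewrite big_cons asboolT //.
  apply: (@lt_le_trans _ _ x.1); first by apply: H; left.
  rewrite lerDl; apply: (dist_of_ge0 x.2) => z Hz; by apply: H; right.
- rewrite big_cons; apply: lt_le_trans; first exact: (IH (fun z Hz => H z (or_intror Hz)) Hx).
  by rewrite lerDr; case: ifP => _ //; apply: ltW; apply: H; left.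
Qed.

Lemma asbool_sym (a b : xconf) : `[< a = b >] = `[< b = a >].
Proof. by have -> : (a = b) = (b = a) by apply: propext; split=> ->. Qed.

End Proof.

Theorem theorem4p12 (C : numClosedFieldType) (d : nat)
  (Delta' Delta : dist C d) (pi : idx) (Theta' : dist C d) :
  dref Delta' Delta -> dstep Delta' pi Theta' ->
  exists Theta : dist C d, dstep Delta pi Theta /\ dref Theta' Theta.
Proof.
move=> [LR [HLR [HD' HD]]] [LS [HLS [HD'2 HT]]].
have Hex : forall x : xconf C d * xconf C d * dist C d,
  exists y : dist C d * seq (C * xconf C d * xconf C d),
    cref x.1.1 x.1.2 -> okstep x.1.1 pi x.2 ->
    okstep x.1.2 pi y.1 /\
    List.Forall (fun z => 0 < z.1.1 /\ cref z.1.2 z.2) y.2 /\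
    x.2 = dist_of [seq (z.1.1, z.1.2) | z <- y.2] /\
    y.1 = dist_of [seq (z.1.1, z.2) | z <- y.2].
  move=> [[c' c] T'] /=.
  have [[Hc Hs]|Hn] := pselect (cref c' c /\ okstep c' pi T').
    have [T [HT1 [K [HK1 [HK2 HK3]]]]] := okstep_sim Hc Hs.
    by exists (T, K).
  by exists (dirac (@Bot C d), [::]) => Hc Hs; exfalso; apply: Hn.
have [f Hf] := choice Hex.
have HRin : forall e, List.In e LR -> 0 < e.1.1 /\ cref e.1.2 e.2.
  by move=> e He; move/List.Forall_forall: HLR; apply.
have HSin : forall s, List.In s LS -> 0 < s.1.1 /\ okstep s.1.2 pi s.2.
  by move=> s Hs; move/List.Forall_forall: HLS; apply.
have HDpos : forall e, List.In e LR -> 0 < Delta' e.1.2.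
  move=> e He; rewrite HD'.
  apply: (dist_of_gt0 (x := (e.1.1, e.1.2))); last first.
    by apply: (List.in_map (fun x => (x.1.1, x.1.2))).
  move=> y /List.in_map_iff [z [<- Hz]] /=; exact: (HRin z Hz).1.
have HDpos' : forall s, List.In s LS -> 0 < Delta' s.1.2.
  move=> s Hs; rewrite HD'2.
  apply: (dist_of_gt0 (x := s.1)); last first.
    by apply: (List.in_map (fun x => x.1)).
  move=> y /List.in_map_iff [z [<- Hz]] /=; exact: (HSin z Hz).1.
pose P (e : C * xconf C d * xconf C d) (s : C * xconf C d * dist C d) := `[< s.1.2 = e.1.2 >].
pose F (e : C * xconf C d * xconf C d) (s : C * xconf C d * dist C d) := f (e.1.2, e.2, s.2).
pose w (e : C * xconf C d * xconf C d) (s : C * xconf C d * dist C d) := e.1.1 * s.1.1 / Delta' e.1.2.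
have HF : forall e s, List.In e LR -> List.In s LS -> P e s ->
    okstep e.2 pi (F e s).1 /\
    List.Forall (fun z => 0 < z.1.1 /\ cref z.1.2 z.2) (F e s).2 /\
    s.2 = dist_of [seq (z.1.1, z.1.2) | z <- (F e s).2] /\
    (F e s).1 = dist_of [seq (z.1.1, z.2) | z <- (F e s).2].
  move=> e s He Hs /asboolP Hes; apply: (Hf (e.1.2, e.2, s.2)).
    exact: (HRin e He).2.
  by rewrite /= -Hes; exact: (HSin s Hs).2.
have Hw : forall e s, List.In e LR -> List.In s LS -> 0 < w e s.
  move=> e s He Hs; rewrite /w divr_gt0 ?mulr_gt0 //.
  - exact: (HRin e He).1.
  - exact: (HSin s Hs).1.
  - exact: HDpos.
pose LD := flatten [seq [seq (w e s, e.2, (F e s).1) | s <- [seq s <- LS | P e s]] | e <- LR].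
pose LT := flatten [seq flatten [seq [seq (w e s * z.1.1, z.1.2, z.2) | z <- (F e s).2]
                     | s <- [seq s <- LS | P e s]] | e <- LR].
exists (fun c => \sum_(x <- LD) x.1.1 * x.2 c); split.
  exists LD; split; last split => //.
    apply: Forall_flat => e He; apply: Forall_mapT => s Hs0; have [Hs HP] := In_filter Hs0; rewrite /=.
    split; first exact: Hw.
    exact: (HF e s He Hs HP).1.
  rewrite HD; apply: funext => c; rewrite /dist_of /LD big_map [in RHS]big_map big_flatten /= big_map.
  apply: eq_big_In => e He; rewrite big_map.
  case: (asboolP (e.2 = c)) => _; last by rewrite big1.
  rewrite /w -mulr_suml -mulr_sumr big_filter big_mkcond /=.
  have -> : \sum_(s <- LS) (if P e s then s.1.1 else 0) = Delta' e.1.2.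
    by rewrite HD'2 /dist_of big_map.
  by rewrite mulfK // gt_eqF // HDpos.
have Hsum : forall (g : xconf C d -> xconf C d -> xconf C d) c,
    dist_of [seq (x.1.1, g x.1.2 x.2) | x <- LT] c =
    \sum_(e <- LR) \sum_(s <- [seq s <- LS | P e s])
        w e s * dist_of [seq (z.1.1, g z.1.2 z.2) | z <- (F e s).2] c.
  move=> g c; rewrite {1}/dist_of /LT big_map big_flatten /=.
  rewrite big_map.
  apply: eq_bigr => e _; rewrite big_flatten /= big_map.
  apply: eq_bigr => s _; rewrite big_map /dist_of big_map mulr_sumr.
  by apply: eq_bigr => z _ /=; case: ifP => _; rewrite ?mulr0.
exists LT; split; last split.
- apply: Forall_flat => e He; apply: Forall_flat => s Hs0; have [Hs HP] := In_filter Hs0.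
  have [_ [HK _]] := HF e s He Hs HP.
  apply: Forall_mapT => z Hz /=.
  have [Hz1 Hz2] := proj1 (List.Forall_forall _ _) HK z Hz.
  by split=> //; rewrite mulr_gt0 //; exact: Hw.
- apply: funext => c; have := Hsum (fun a b => a) c; rewrite /= => ->.
  rewrite HT /=.
  transitivity (\sum_(e <- LR) \sum_(s <- [seq s <- LS | P e s]) w e s * s.2 c); last first.
    apply: eq_big_In => e He; apply: eq_big_In => s Hs0; have [Hs HP] := In_filter Hs0.
    by have [_ [_ [<- _]]] := HF e s He Hs HP.
  rewrite (eq_bigr (fun e => \sum_(s <- LS) (if P e s then e.1.1 else 0) * (s.1.1 * s.2 c / Delta' s.1.2))); last first.
    move=> e _; rewrite big_filter big_mkcond; apply: eq_bigr => s _ /=.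
    rewrite /P; case: (asboolP (s.1.2 = e.1.2)) => [Hse|_]; last by rewrite mul0r.
    by rewrite /w Hse !mulrA [LHS]mulrAC.
  rewrite exchange_big /=.
  apply: esym; apply: eq_big_In => s Hs; rewrite -mulr_suml.
  have -> : \sum_(e <- LR) (if P e s then e.1.1 else 0) = Delta' s.1.2.
    by rewrite HD' /dist_of big_map; apply: eq_bigr => e _ /=; rewrite /P asbool_sym.
  by rewrite mulrC divfK // gt_eqF // HDpos'.
- apply: funext => c; have := Hsum (fun a b => b) c; rewrite /= => ->.
  rewrite /LD big_flatten /= big_map.
  apply: eq_big_In => e He; rewrite big_map.
  apply: eq_big_In => s Hs0; have [Hs HP] := In_filter Hs0.
  by have [_ [_ [_ <-]]] := HF e s He Hs HP.
Qed.
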